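(* Let $\mathfrak S$ be a commutative semiring and $\sigma_{\mathfrak S}$ a set of ideals of $\mathfrak S$ with the ideal topology. Then $\sigma_{\mathfrak S}$ is sober if and only if, for every ideal $\mathfrak a$ of $\mathfrak S$ such that the subbasic closed set $\mathfrak a^{\uparrow}$ is non-empty and irreducible, one has $\bigcap\{\mathfrak x\in\sigma_{\mathfrak S}\mid \mathfrak a\subseteq\mathfrak x\}\in\sigma_{\mathfrak S}$.
   Context: A semiring $(\mathfrak S,+,0,\cdot,1)$ has $(\mathfrak S,+,0)$ a commutative monoid, $(\mathfrak S,\cdot,1)$ a monoid, $0r=r0=0$, and two-sided distributivity; all semirings are commutative. An ideal is a nonempty proper subset closed under addition and under multiplication by elements of $\mathfrak S$. For an ideal $\mathfrak a$, $\mathfrak a^{\uparrow}=\{\mathfrak x\in\sigma_{\mathfrak S}\mid\mathfrak a\subseteq\mathfrak x\}$; the ideal topology on $\sigma_{\mathfrak S}$ has the sets $\mathfrak a^{\uparrow}$ ($\mathfrak a$ any ideal) as a subbasis of closed sets. A space is sober if every non-empty irreducible closed subset is the closure of a unique point. *)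

(* Defs.v *)
From HB Require Import structures.
From mathcomp Require Import all_boot all_algebra.
From mathcomp Require Import boolp classical_sets.
Set Implicit Arguments. Unset Strict Implicit. Unset Printing Implicit Defensive.
Import GRing.Theory.
Local Open Scope ring_scope.
Local Open Scope classical_set_scope.

(* Commutative semiring: comPzSemiRingType (0 = 1 allowed, as in the paper). *)
Section IdealTopology.
Variable S : comPzSemiRingType.

Definition ideal (a : set S) : Prop :=
  [/\ a !=set0, a != setT,
      (forall x y, a x -> a y -> a (x + y)) &
      (forall r x, a x -> a (r * x))].

Variable sigma : set (set S).

Definition upset (a : set S) : set (set S) := [set x | sigma x /\ a `<=` x].

Definition fin_union_subbasic (D : set (set S)) : Prop :=
  exists (n : nat) (f : 'I_n -> set S),
    (forall i, ideal (f i)) /\ D = [set x | exists i, upset (f i) x].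

(* closed sets of the topology generated by the subbasis of closed sets
   { a^uparrow | a ideal }: arbitrary intersections (within sigma) of
   finite unions of subbasic closed sets. *)
Definition ideal_closed (C : set (set S)) : Prop :=
  exists F : set (set (set S)),
    (forall D, F D -> fin_union_subbasic D) /\
    C = sigma `&` [set x | forall D, F D -> D x].

Definition irreducible (C : set (set S)) : Prop :=
  forall C1 C2, ideal_closed C1 -> ideal_closed C2 ->
    C `<=` C1 `|` C2 -> C `<=` C1 \/ C `<=` C2.

Definition pt_closure (x : set S) : set (set S) :=
  [set y | sigma y /\ forall C, ideal_closed C -> C x -> C y].

Definition sober : Prop :=
  forall C, ideal_closed C -> C !=set0 -> irreducible C ->
    exists! x, sigma x /\ C = pt_closure x.

End IdealTopology.

(* Main.v *)
Require Import Defs.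
From HB Require Import structures.
From mathcomp Require Import all_boot all_algebra.
From mathcomp Require Import boolp classical_sets.
Local Open Scope ring_scope.
Local Open Scope classical_set_scope.
Import GRing.Theory.

Set Implicit Arguments.
Section Aux.
Context {S : comPzSemiRingType} {sigma : set (set S)}.
Hypothesis Hsigma : forall x, sigma x -> ideal x.

Lemma fin_closed D : fin_union_subbasic sigma D -> ideal_closed sigma D.
Proof.
move=> HD; exists [set D]; split; first by move=> D' ->.
case: HD => n [f [_ ->]].
rewrite eqEsubset; split => x /=.
  move=> [i [Hs Hi]]; split; first by [].
  by move=> D' ->; exists i.
by move=> [_ H]; exact: (H _ erefl).
Qed.

Lemma up_fin a : ideal a -> fin_union_subbasic sigma (upset sigma a).
Proof.
move=> Ha; exists 1%N, (fun _ => a); split => //.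
rewrite eqEsubset; split => x /=.
  by move=> Hx; exists ord0.
by move=> [_ Hx].
Qed.

Lemma up_closed a : ideal a -> ideal_closed sigma (upset sigma a).
Proof. by move=> Ha; apply/fin_closed/up_fin. Qed.

Lemma irr_fin C : C !=set0 -> irreducible sigma C ->
  forall n (f : 'I_n -> set S), (forall i, ideal (f i)) ->
  C `<=` [set x | exists i, upset sigma (f i) x] ->
  exists i, C `<=` upset sigma (f i).
Proof.
move=> [c Cc] Hirr; elim=> [|n IH] f Hf HC.
  by case: (HC c Cc) => [[]].
have H1 := up_closed (Hf ord0).
have H2 : ideal_closed sigma [set x | exists i : 'I_n, upset sigma (f (lift ord0 i)) x].
  apply: fin_closed; exists n, (fun i => f (lift ord0 i)); split => //.
case: (Hirr _ _ H1 H2).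
- move=> x /HC [i]; case: (unliftP ord0 i) => [j ->|->] Hi.
    by right; exists j.
  by left.
- by move=> H; exists ord0.
- move=> H; case: (IH _ (fun i => Hf (lift ord0 i)) H) => j Hj.
  by exists (lift ord0 j).
Qed.

Lemma closed_up C : ideal_closed sigma C -> forall x y, C x -> sigma y -> x `<=` y -> C y.
Proof.
move=> [F [HF ->]] x y [Hsx Hx] Hy Hxy; split => // D FD.
case: (HF D FD) => n [f [Hf HD]].
move: (Hx D FD); rewrite HD => -[i [_ Hi]].
by exists i; split => //; apply: subset_trans Hxy.
Qed.

Lemma ptcl x : sigma x -> pt_closure sigma x = upset sigma x.
Proof.
move=> Hx; rewrite eqEsubset; split => y /=.
  move=> [Hy H]; have := H _ (up_closed (Hsigma Hx)); apply; by split.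
move=> [Hy Hxy]; split => // C HC Cx.
exact: closed_up HC _ _ Cx Hy Hxy.
Qed.

Lemma up_inj x x' : sigma x -> sigma x' -> upset sigma x = upset sigma x' -> x = x'.
Proof.
move=> Hx Hx' E; rewrite eqEsubset; split.
  have : upset sigma x' x' by split => // t.
  by rewrite -E => -[].
have : upset sigma x x by split => // t.
by rewrite E => -[].
Qed.

End Aux.

Theorem theorem3p9 (S : comPzSemiRingType) (sigma : set (set S))
  (Hsigma : forall x, sigma x -> ideal x) :
  sober sigma <->
  (forall a : set S, ideal a ->
     upset sigma a !=set0 -> irreducible sigma (upset sigma a) ->
     sigma (\bigcap_(x in upset sigma a) x)).
Proof.
split.
- move=> Hsob a Ha Hne Hirr.
  case: (Hsob _ (up_closed Ha) Hne Hirr) => x [[Hx E] _].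
  rewrite ptcl // in E.
  have -> : \bigcap_(y in upset sigma a) y = x.
    rewrite E eqEsubset; split => s /=.
      by move=> H; apply: H; split => // t.
    by move=> xs y [_ Hy]; apply: Hy.
  exact: Hx.
- move=> H C HC Hne Hirr.
  set b := \bigcap_(y in C) y.
  have HCs : C `<=` sigma by case: HC => F [_ ->] y [].
  have [c Cc] := Hne.
  have Hb : ideal b.
    have [[z z0] Hc1 Hc2 Hc3] := Hsigma _ (HCs _ Cc).
    split.
    + exists 0 => y Cy /=.
      have [[w w0] _ _ H4] := Hsigma _ (HCs _ Cy).
      by rewrite -(mul0r w); apply: H4.
    + apply/eqP => Eb; move/eqP: Hc1; apply.
      rewrite eqEsubset; split => // s _.
      have : b s by rewrite Eb.
      by move=> /(_ c Cc).
    + move=> x y bx by' w Cw /=.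
      have [_ _ H3 _] := Hsigma _ (HCs _ Cw).
      by apply: H3; [apply: bx | apply: by'].
    + move=> r x bx w Cw /=.
      have [_ _ _ H4] := Hsigma _ (HCs _ Cw).
      by apply: H4; apply: bx.
  have EC : C = upset sigma b.
    rewrite eqEsubset; split => y.
      move=> Cy; split; first exact: HCs.
      by move=> s bs; apply: bs.
    move=> [Hy Hby].
    case: HC Hirr => F [HF EC] Hirr; rewrite EC; split => // D FD.
    case: (HF D FD) => n [f [Hf HD]].
    have HCD : C `<=` [set x | exists i, upset sigma (f i) x].
      by rewrite -HD EC => x [_]; apply.
    have [i Hi] : exists i, C `<=` upset sigma (f i) by apply: (irr_fin Hne Hirr) HCD.
    rewrite HD; exists i; split => //.
    move=> s fs; apply: Hby => w Cw; by case: (Hi w Cw) => _; apply.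
  have Hbs : sigma b.
    have := H b Hb; rewrite -EC => /(_ Hne Hirr).
    by [].
  exists b; split.
    by split => //; rewrite ptcl.
  move=> x' [Hx' E']; rewrite ptcl // in E'.
  by apply: (up_inj Hbs Hx'); rewrite -EC.
Qed.
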